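(* Let $D:\mathbf{Sets}\to\mathbf{cMet}_1$ send a set $X$ to $X$ with the discrete metric ($d(x,y)=1$ for $x\ne y$, $d(x,x)=0$) and a function to itself. Then $\mathbf{CMT}(D X)=\mathbf{U}(X)$ as preorders for every set $X$, and $(D,\mathrm{id})$ is an embedding of universally coherent hyperdoctrines $\mathbf{U}\to\mathbf{CMT}$ which is bijective on predicates. Consequently, for every infinite set $X$ the preorder $\mathbf{CMT}(DX)$ has neither a Heyting negation nor a Heyting implication.
   Context: $\mathbf{cMet}_1$ is the category of complete metric spaces of diameter at most 1 with uniformly continuous maps. For functions $\alpha,\beta:X\to[0,1]$ write $\alpha\sqsubseteq\beta$ if for every $\varepsilon>0$ there exists $\delta>0$ such that for all $x$, $\alpha(x)\le\delta$ implies $\beta(x)\le\varepsilon$. $\mathbf{U}$ is the indexed preorder on $\mathbf{Sets}$ with $\mathbf{U}(X)$ all functions $X\to[0,1]$ under $\sqsubseteq$ and reindexing by precomposition; $\mathbf{CMT}$ is the indexed preorder on $\mathbf{cMet}_1$ with $\mathbf{CMT}(X,d)$ the uniformly continuous functions $(X,d)\to[0,1]$ under $\sqsubseteq$ and reindexing by precomposition. Both are universally coherent hyperdoctrines (meet $=\max$, join $=\min$, $\exists=\inf$ and $\forall=\sup$ over fibres of projections). A morphism of universally coherent hyperdoctrines $(F,\eta):\mathbf P\to\mathbf P'$ (bases $\mathcal C,\mathcal D$) consists of a finite-product-preserving functor $F:\mathcal C\to\mathcal D$ and a pseudonatural transformation $\eta:\mathbf P\to\mathbf P'\circ F^{op}$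 whose components preserve finite meets and joins up to isomorphism, commuting up to isomorphism with $\exists_\pi$ and $\forall_\pi$ along projections and preserving equality predicates. It is an embedding if $F$ is full and faithful and each $\eta_X$ reflects the order. A Heyting negation on a preorder with meets and bottom $\bot$ is an operation $\neg$ with $\gamma\wedge\beta\le\bot\iff\gamma\le\neg\beta$ for all $\gamma$. *)

(* Defs.v *)
From Stdlib Require Import Reals Lra Classical ClassicalEpsilon List.
From Coquelicot Require Import Coquelicot.
Open Scope R_scope.

Definition in01 {X : Type} (a : X -> R) : Prop := forall x, 0 <= a x <= 1.

Definition sqle {X : Type} (a b : X -> R) : Prop :=
  forall eps, 0 < eps -> exists delta, 0 < delta /\
    forall x, a x <= delta -> b x <= eps.

Definition sqeq {X : Type} (a b : X -> R) : Prop := sqle a b /\ sqle b a.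

Record cMet1 := {
  cm_car :> Type;
  cm_d : cm_car -> cm_car -> R;
  cm_nonneg : forall x y, 0 <= cm_d x y;
  cm_refl : forall x, cm_d x x = 0;
  cm_sep : forall x y, cm_d x y = 0 -> x = y;
  cm_sym : forall x y, cm_d x y = cm_d y x;
  cm_tri : forall x y z, cm_d x z <= cm_d x y + cm_d y z;
  cm_diam : forall x y, cm_d x y <= 1;
  cm_complete : forall u : nat -> cm_car,
    (forall eps, 0 < eps -> exists N, forall m n, (N <= m)%nat -> (N <= n)%nat ->
        cm_d (u m) (u n) < eps) ->
    exists l, forall eps, 0 < eps -> exists N, forall n, (N <= n)%nat ->
        cm_d (u n) l < eps
}.

Definition unif_cont (Y Z : cMet1) (f : Y -> Z) : Prop :=
  forall eps, 0 < eps -> exists delta, 0 < delta /\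
    forall x y, cm_d Y x y < delta -> cm_d Z (f x) (f y) < eps.

Definition unif_cont_R (Y : cMet1) (a : Y -> R) : Prop :=
  forall eps, 0 < eps -> exists delta, 0 < delta /\
    forall x y, cm_d Y x y < delta -> Rabs (a x - a y) < eps.

Definition ddisc (X : Type) (x y : X) : R :=
  if excluded_middle_informative (x = y) then 0 else 1.

Lemma ddisc_nonneg X x y : 0 <= ddisc X x y.
Proof. unfold ddisc; destruct excluded_middle_informative; lra. Qed.
Lemma ddisc_refl X x : ddisc X x x = 0.
Proof. unfold ddisc; destruct excluded_middle_informative; congruence. Qed.
Lemma ddisc_sep X x y : ddisc X x y = 0 -> x = y.
Proof. unfold ddisc; destruct excluded_middle_informative; auto; lra. Qed.
Lemma ddisc_sym X x y : ddisc X x y = ddisc X y x.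
Proof.
  unfold ddisc; do 2 destruct excluded_middle_informative; subst; congruence.
Qed.
Lemma ddisc_tri X x y z : ddisc X x z <= ddisc X x y + ddisc X y z.
Proof.
  unfold ddisc; do 3 destruct excluded_middle_informative; subst; try lra;
  congruence.
Qed.
Lemma ddisc_diam X x y : ddisc X x y <= 1.
Proof. unfold ddisc; destruct excluded_middle_informative; lra. Qed.
Lemma ddisc_lt1 X x y : ddisc X x y < 1 -> x = y.
Proof. unfold ddisc; destruct excluded_middle_informative; auto; lra. Qed.

Lemma ddisc_complete (X : Type) : forall u : nat -> X,
    (forall eps, 0 < eps -> exists N, forall m n, (N <= m)%nat -> (N <= n)%nat ->
        ddisc X (u m) (u n) < eps) ->
    exists l, forall eps, 0 < eps -> exists N, forall n, (N <= n)%nat ->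
        ddisc X (u n) l < eps.
Proof.
  intros u Hu. destruct (Hu 1 Rlt_0_1) as [N HN].
  exists (u N). intros eps Heps. exists N. intros n Hn.
  rewrite (ddisc_lt1 X (u n) (u N) (HN n N Hn (le_n N))), ddisc_refl. exact Heps.
Qed.

Definition D (X : Type) : cMet1 :=
  {| cm_car := X; cm_d := ddisc X;
     cm_nonneg := ddisc_nonneg X; cm_refl := ddisc_refl X;
     cm_sep := ddisc_sep X; cm_sym := ddisc_sym X; cm_tri := ddisc_tri X;
     cm_diam := ddisc_diam X; cm_complete := ddisc_complete X |}.

Definition Upred (X : Type) (a : X -> R) : Prop := in01 a.

Definition CMTpred (Y : cMet1) (a : Y -> R) : Prop := in01 a /\ unif_cont_R Y a.

Definition top_p {X : Type} : X -> R := fun _ => 0.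
Definition bot_p {X : Type} : X -> R := fun _ => 1.
Definition meet_p {X : Type} (a b : X -> R) : X -> R := fun x => Rmax (a x) (b x).
Definition join_p {X : Type} (a b : X -> R) : X -> R := fun x => Rmin (a x) (b x).

(* infimum / supremum of a subset of [0,1], computed in the complete
   lattice [0,1] (inf of the empty set is 1, sup of the empty set is 0) *)
Definition inf01 (E : R -> Prop) : R := real (Glb_Rbar (fun r => E r \/ r = 1)).
Definition sup01 (E : R -> Prop) : R := real (Lub_Rbar (fun r => E r \/ r = 0)).

Definition exists_p {X Y : Type} (a : (X * Y)%type -> R) : X -> R :=
  fun x => inf01 (fun r => exists y, r = a (x, y)).
Definition forall_p {X Y : Type} (a : (X * Y)%type -> R) : X -> R :=
  fun x => sup01 (fun r => exists y, r = a (x, y)).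

(* equality predicates: in U, 0 on the diagonal and 1 elsewhere
   (= ∃_Δ ⊤); in CMT(Y,d), the metric d itself *)
Definition eqU (X : Type) : (X * X)%type -> R :=
  fun p => if excluded_middle_informative (fst p = snd p) then 0 else 1.
Definition eqCMT (Y : cMet1) : (Y * Y)%type -> R := fun p => cm_d Y (fst p) (snd p).

Definition D_functor_full_faithful_fp : Prop :=
  (forall (X Y : Type) (f : X -> Y), unif_cont (D X) (D Y) f) /\
  (forall (X Y : Type) (Z : cMet1) (f : Z -> X) (g : Z -> Y),
      unif_cont Z (D X) f -> unif_cont Z (D Y) g ->
      exists h : Z -> (X * Y)%type, unif_cont Z (D (X * Y)%type) h /\
        (forall z, fst (h z) = f z /\ snd (h z) = g z) /\
        (forall h' : Z -> (X * Y)%type, unif_cont Z (D (X * Y)%type) h' ->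
           (forall z, fst (h' z) = f z /\ snd (h' z) = g z) ->
           forall z, h' z = h z)) /\
  (forall Z : cMet1, exists h : Z -> unit, unif_cont Z (D unit) h /\
        forall h' : Z -> unit, unif_cont Z (D unit) h' -> forall z, h' z = h z) /\
  (forall (X Y : Type) (h : D X -> D Y), unif_cont (D X) (D Y) h ->
      exists f : X -> Y, forall x, h x = f x) /\
  (forall (X Y : Type) (f g : X -> Y), (forall x, f x = g x :> D Y) -> forall x, f x = g x).

Definition eta_embedding (eta : forall X : Type, (X -> R) -> (D X -> R)) : Prop :=
  (forall X a, Upred X a -> CMTpred (D X) (eta X a)) /\
  (forall X a b, Upred X a -> Upred X b -> (sqle a b <-> sqle (eta X a) (eta X b))) /\
  (forall (X Y : Type) (f : X -> Y) a, Upred Y a ->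
      sqeq (eta X (fun x => a (f x))) (fun x => eta Y a (f x))) /\
  (forall X, sqeq (eta X top_p) top_p) /\
  (forall X a b, Upred X a -> Upred X b ->
      sqeq (eta X (meet_p a b)) (meet_p (eta X a) (eta X b))) /\
  (forall X, sqeq (eta X bot_p) bot_p) /\
  (forall X a b, Upred X a -> Upred X b ->
      sqeq (eta X (join_p a b)) (join_p (eta X a) (eta X b))) /\
  (* ∃ and ∀ along projections X * Y -> X (D(X*Y) is the product of D X, D Y) *)
  (forall (X Y : Type) (a : (X * Y)%type -> R), Upred (X * Y)%type a ->
      sqeq (eta X (exists_p a)) (@exists_p X Y (eta (X * Y)%type a))) /\
  (forall (X Y : Type) (a : (X * Y)%type -> R), Upred (X * Y)%type a ->
      sqeq (eta X (forall_p a)) (@forall_p X Y (eta (X * Y)%type a))) /\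
  (forall X : Type, sqeq (eta (X * X)%type (eqU X)) (eqCMT (D X))).

Definition bijective_on_predicates (eta : forall X : Type, (X -> R) -> (D X -> R)) : Prop :=
  forall X : Type,
    (forall a a', Upred X a -> Upred X a' -> eta X a = eta X a' -> a = a') /\
    (forall b, CMTpred (D X) b -> exists a, Upred X a /\ eta X a = b).

Definition has_heyting_neg (Y : cMet1) : Prop :=
  exists neg : (Y -> R) -> (Y -> R),
    (forall b, CMTpred Y b -> CMTpred Y (neg b)) /\
    (forall g b, CMTpred Y g -> CMTpred Y b ->
       (sqle (meet_p g b) bot_p <-> sqle g (neg b))).

Definition has_heyting_imp (Y : cMet1) : Prop :=
  exists imp : (Y -> R) -> (Y -> R) -> (Y -> R),
    (forall a b, CMTpred Y a -> CMTpred Y b -> CMTpred Y (imp a b)) /\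
    (forall g a b, CMTpred Y g -> CMTpred Y a -> CMTpred Y b ->
       (sqle (meet_p g a) b <-> sqle g (imp a b))).

Definition infinite (X : Type) : Prop := ~ exists l : list X, forall x, In x l.

(* Main.v *)
Require Import Defs.
From Stdlib Require Import Reals Lra Lia Classical ClassicalEpsilon List.
Open Scope R_scope.

Lemma part1 (X : Type) (a : X -> R) : CMTpred (D X) a <-> Upred X a.
Proof.
  split.
  - intros [H _]; exact H.
  - intros H; split; [exact H|].
    intros eps He; exists 1; split; [lra|].
    intros x y Hxy; simpl in Hxy.
    rewrite (ddisc_lt1 _ _ _ Hxy). rewrite Rminus_diag_eq by reflexivity.
    rewrite Rabs_R0; lra.
Qed.

Lemma sqle_refl {X} (a : X -> R) : sqle a a.
Proof. intros eps He; exists eps; split; auto. Qed.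

Lemma sqeq_refl {X} (a : X -> R) : sqeq a a.
Proof. split; apply sqle_refl. Qed.

Fixpoint pref {X : Type} (p : list X -> X) (n : nat) : list X :=
  match n with O => nil | S k => p (pref p k) :: pref p k end.

Lemma pref_in {X} (p : list X -> X) m n : (m < n)%nat -> In (p (pref p m)) (pref p n).
Proof.
  induction n; intros H; [lia|].
  simpl. destruct (Nat.eq_dec m n) as [->|Hne]; [left; reflexivity|].
  right; apply IHn; lia.
Qed.

Lemma pref_inj {X} (p : list X -> X) (Hp : forall l, ~ In (p l) l) m n :
  p (pref p m) = p (pref p n) -> m = n.
Proof.
  intros E. destruct (Compare_dec.lt_eq_lt_dec m n) as [[Hl|Hl]|Hl]; auto.
  - exfalso. apply (Hp (pref p n)). rewrite <- E. apply pref_in; auto.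
  - exfalso. apply (Hp (pref p m)). rewrite E. apply pref_in; auto.
Qed.

Lemma small_pred X : infinite X ->
  exists b : X -> R, in01 b /\ forall d, 0 < d -> exists x, 0 < b x <= d.
Proof.
  intros Hinf.
  assert (Hnot : forall l : list X, {x | ~ In x l}).
  { intro l. apply constructive_indefinite_description.
    apply not_all_ex_not. intro Hall; apply Hinf; exists l; exact Hall. }
  set (p := fun l => proj1_sig (Hnot l)).
  assert (Hp : forall l, ~ In (p l) l) by (intro l; exact (proj2_sig (Hnot l))).
  set (u := fun n => p (pref p n)).
  set (b := fun x => match excluded_middle_informative (exists n, x = u n) with
                     | left H => / INR (S (proj1_sig (constructive_indefinite_description _ H)))
                     | right _ => 1 end).
  assert (Hinv : forall k, 0 < / INR (S k) <= 1).
  { intro k. assert (1 <= INR (S k)) by (apply (le_INR 1); lia).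
    split. apply Rinv_0_lt_compat; lra.
    rewrite <- Rinv_1. apply Rinv_le_contravar; lra. }
  assert (Hbu : forall k, b (u k) = / INR (S k)).
  { intro k. unfold b. destruct excluded_middle_informative as [H|H].
    - destruct constructive_indefinite_description as [m Hm]. simpl.
      apply pref_inj in Hm; auto. subst; reflexivity.
    - exfalso; apply H; exists k; reflexivity. }
  exists b. split.
  - intro x. unfold b. destruct excluded_middle_informative as [e|e]; [pose proof (Hinv (proj1_sig (constructive_indefinite_description (fun n : nat => x = u n) e))); lra|lra].
  - intros d Hd. destruct (archimed_cor1 d Hd) as [N [HN1 HN2]].
    exists (u (pred N)). rewrite Hbu.
    replace (S (pred N)) with N by lia. split; [|lra]; pose proof (Hinv (pred N)) as HH; replace (S (pred N)) with N in HH by lia; lra.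
Qed.

Lemma no_neg X (b : X -> R) : in01 b -> (forall d, 0 < d -> exists x, 0 < b x <= d) ->
  ~ has_heyting_neg (D X).
Proof.
  intros Hb Hsmall [neg [Hcl Hadj]].
  assert (Hbp : CMTpred (D X) b) by (apply part1; exact Hb).
  set (c := neg b).
  assert (Hc : CMTpred (D X) c) by (apply Hcl; exact Hbp).
  assert (Hcc : sqle (meet_p c b) bot_p).
  { apply (Hadj c b Hc Hbp). apply sqle_refl. }
  destruct (Hcc (1/2)) as [d [Hd Hdx]]; [lra|].
  destruct (Hsmall d Hd) as [x0 [H0 H1]].
  set (eta := b x0 / 2).
  set (g := fun x : X => if Rle_dec (b x) eta then 1 else 0).
  assert (Hg : CMTpred (D X) g).
  { apply part1; intro x; unfold g; destruct Rle_dec; lra. }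
  assert (Hgb : sqle (meet_p g b) bot_p).
  { intros eps He. exists (eta/2). split; [unfold eta; lra|].
    intros x Hx. exfalso. pose proof (Hb x). pose proof (Hb x0).
    unfold meet_p, g in Hx. unfold eta in *.
    destruct Rle_dec; unfold Rmax in Hx; destruct Rle_dec; lra. }
  apply (Hadj g b Hg Hbp) in Hgb.
  destruct (Hgb (d/2)) as [d' [Hd' Hx']]; [lra|].
  assert (Hcx0 : c x0 <= d/2).
  { apply Hx'. unfold g. destruct Rle_dec; unfold eta in *; lra. }
  assert (Hm := Hdx x0). unfold meet_p, bot_p in Hm.
  assert (Rmax (c x0) (b x0) <= d) by (unfold Rmax; destruct Rle_dec; lra).
  specialize (Hm H). lra.
Qed.

Lemma imp_neg X : has_heyting_imp X -> has_heyting_neg X.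
Proof.
  intros [imp [Hcl Hadj]]. exists (fun b => imp b bot_p).
  assert (Hbot : CMTpred X bot_p).
  { split. intro; unfold bot_p; lra.
    intros eps He; exists 1; split; [lra|]; intros; unfold bot_p.
    rewrite Rminus_diag_eq, Rabs_R0 by reflexivity; lra. }
  split.
  - intros b Hb; apply Hcl; auto.
  - intros g b Hg Hb; apply Hadj; auto.
Qed.

Theorem mainTheorem6 :
  (forall (X : Type) (a : X -> R), CMTpred (D X) a <-> Upred X a) /\
  D_functor_full_faithful_fp /\
  eta_embedding (fun X a => a) /\
  bijective_on_predicates (fun X a => a) /\
  (forall X : Type, infinite X ->
     ~ has_heyting_neg (D X) /\ ~ has_heyting_imp (D X)).
Proof.
  split; [exact part1|].
  split.
  { split; [|split; [|split; [|split]]].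
    - intros X Y f eps He. exists 1; split; [lra|]. intros x y Hxy; simpl in *.
      rewrite (ddisc_lt1 _ _ _ Hxy), ddisc_refl; lra.
    - intros X Y Z f g Hf Hg. exists (fun z => (f z, g z)). split; [|split].
      + intros eps He. destruct (Hf (Rmin eps 1)) as [d1 [Hd1 H1]].
        { unfold Rmin; destruct Rle_dec; lra. }
        destruct (Hg (Rmin eps 1)) as [d2 [Hd2 H2]].
        { unfold Rmin; destruct Rle_dec; lra. }
        exists (Rmin d1 d2). split; [unfold Rmin; destruct Rle_dec; lra|].
        intros x y Hxy.
        assert (Hm1 : Rmin d1 d2 <= d1) by apply Rmin_l.
        assert (Hm2 : Rmin d1 d2 <= d2) by apply Rmin_r.
        assert (He1 : Rmin eps 1 <= 1) by apply Rmin_r.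
        assert (He2 : Rmin eps 1 <= eps) by apply Rmin_l.
        specialize (H1 x y ltac:(lra)). specialize (H2 x y ltac:(lra)).
        simpl in *.
        assert (Ef : f x = f y) by (apply (ddisc_lt1 X); lra).
        assert (Eg : g x = g y) by (apply (ddisc_lt1 Y); lra).
        rewrite Ef, Eg.
        rewrite ddisc_refl; lra.
      + intros z; split; reflexivity.
      + intros h' _ Hh z. destruct (Hh z) as [E1 E2].
        rewrite (surjective_pairing (h' z)), E1, E2; reflexivity.
    - intros Z. exists (fun _ => tt). split.
      + intros eps He. exists 1; split; [lra|]. intros; simpl; rewrite ddisc_refl; lra.
      + intros h' _ z. destruct (h' z); reflexivity.
    - intros X Y h _. exists h; intro; reflexivity.
    - intros X Y f g H; exact H. }
  split.
  { split; [|split; [|split; [|split; [|split; [|split; [|split; [|split; [|split]]]]]]]];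
      intros; try apply sqeq_refl.
    - apply part1; auto.
    - tauto. }
  split.
  { intros X; split.
    - intros a a' _ _ E; exact E.
    - intros b Hb; exists b; split; [apply (proj1 (part1 X b)); exact Hb|reflexivity]. }
  intros X Hinf. destruct (small_pred X Hinf) as [b [Hb Hs]].
  split.
  - apply (no_neg X b Hb Hs).
  - intro H; apply (no_neg X b Hb Hs), imp_neg, H.
Qed.
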